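(* The category $\mathbf{gOS}^{op}$ is Gröbner.
   Context: Gröbner categories. Let $\mathcal{C}$ be a small category and $c$ an object. An admissible order on the morphisms out of $c$ is a choice, for every object $c'$, of a well-order $\preceq_{c'}$ on $\mathrm{Hom}(c,c')$ such that $f\prec_{c'} f'$ implies $g\circ f\prec_{c''} g\circ f'$ for all $g:c'\to c''$. On morphisms out of $c$ put the preorder $f\le g$ iff $g=h\circ f$ for some $h$; $|c/\mathcal{C}|$ is the associated poset. A poset is Noetherian if every sequence $x_1,x_2,\dots$ has $i<j$ with $x_i\le x_j$. $\mathcal{C}$ is Gröbner if for every object $c$: (G1) morphisms out of $c$ admit an admissible order, and (G2) $|c/\mathcal{C}|$ is Noetherian. The category $\mathbf{gOS}$ of graded ordered surjections has objects $\underline{n}=\{1,\dots,n\}$ for $n\ge 0$. A morphism $f:\underline{n}\to\underline{m}$ is a surjection $f$ such that $\min f^{-1}(i)<\min f^{-1}(j)$ whenever $i<j$, together with a grading $g_f:\underline{m}\to\mathbb{N}$. For $f:\underline{n}\to\underline{m}$ and $h:\underline{m}\to\underline{k}$, the composite $h\circ f$ is the composite of maps with grading $g_{h\circ f}(i)=g_h(i)+\sum_{j\in h^{-1}(i)}g_f(j)$. *)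

(* Defs.v *)
From mathcomp Require Import all_boot all_order.
Set Implicit Arguments. Unset Strict Implicit. Unset Printing Implicit Defensive.
Import Order.TTheory.

(* Only the data (objects, hom-types, composition) enter the notion of *)
(* Groebner category, so we only package the data.                    *)

Record cat_data := CatData {
  Obj : Type;
  Hom : Obj -> Obj -> Type;
  comp : forall a b c : Obj, Hom b c -> Hom a b -> Hom a c
}.
Arguments Hom : clear implicits.
Arguments comp {_ _ _ _} _ _.

Definition op_cat (C : cat_data) : cat_data :=
  @CatData (Obj C) (fun a b => Hom C b a)
           (fun a b c (g : Hom C c b) (f : Hom C b a) => @comp C c b a f g).

Definition is_well_order (T : Type) (le : T -> T -> Prop) : Prop :=
  [/\ (forall x, le x x),
      (forall x y, le x y -> le y x -> x = y),
      (forall x y z, le x y -> le y z -> le x z),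
      (forall x y, le x y \/ le y x)
    & well_founded (fun x y => le x y /\ x <> y)].

Definition strict_of (T : Type) (le : T -> T -> Prop) (x y : T) : Prop :=
  le x y /\ x <> y.

Definition admissible_order (C : cat_data) (c : Obj C)
    (le : forall c' : Obj C, Hom C c c' -> Hom C c c' -> Prop) : Prop :=
  (forall c', is_well_order (le c')) /\
  (forall (c' c'' : Obj C) (g : Hom C c' c'') (f f' : Hom C c c'),
      strict_of (le c') f f' -> strict_of (le c'') (comp g f) (comp g f')).

Definition under_le (C : cat_data) (c : Obj C)
    (x y : {c' : Obj C & Hom C c c'}) : Prop :=
  exists h : Hom C (projT1 x) (projT1 y), projT2 y = comp h (projT2 x).

Definition noetherian (T : Type) (le : T -> T -> Prop) : Prop :=
  forall s : nat -> T, exists i j : nat, (i < j)%N /\ le (s i) (s j).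

Definition groebner (C : cat_data) : Prop :=
  forall c : Obj C,
    (exists le, @admissible_order C c le) /\ noetherian (@under_le C c).

(* The object n stands for {1,..,n}; we use 'I_n = {0,..,n-1}, with    *)
(* the same order, so ordered surjections correspond exactly.          *)

(* min f^{-1}(i)  (for surjective f the preimage is nonempty) *)
Definition minpre (n m : nat) (f : {ffun 'I_n -> 'I_m}) (i : 'I_m) : nat :=
  \big[Order.min/n]_(k : 'I_n | f k == i) (k : nat).

Definition ordered_surj (n m : nat) (f : {ffun 'I_n -> 'I_m}) : bool :=
  [forall i : 'I_m, exists a : 'I_n, f a == i] &&
  [forall i : 'I_m, forall j : 'I_m, (i < j)%N ==> (minpre f i < minpre f j)%N].

Record gOS_hom (n m : nat) := GOSHom {
  gmap : {ffun 'I_n -> 'I_m};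
  ggrade : {ffun 'I_m -> nat};
  gmapP : ordered_surj gmap
}.

Lemma minpre_spec (n m : nat) (f : {ffun 'I_n -> 'I_m}) (i : 'I_m) (a : 'I_n) :
  f a = i ->
  exists2 b : 'I_n, f b = i & minpre f i = b /\ forall k, f k = i -> (b <= k)%N.
Proof.
move=> fa.
have Pa : f a == i by rewrite fa.
rewrite /minpre (bigmin_eq_arg n a (fun k => f k == i) (fun k : 'I_n => (k : nat)) Pa);
  last by move=> l _; apply: ltnW.
case: (@arg_minP _ _ _ a (fun k => f k == i) (fun k : 'I_n => (k : nat)) Pa)
  => k Pk kmin.
exists k; first by apply/eqP.
by split => // l /eqP fl; exact: kmin.
Qed.

Lemma ordered_surj_comp (n m p : nat) (f : {ffun 'I_n -> 'I_m})
  (h : {ffun 'I_m -> 'I_p}) :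
  ordered_surj f -> ordered_surj h ->
  ordered_surj [ffun a => h (f a)].
Proof.
move=> /andP[/forallP fs /forallP fo] /andP[/forallP hs /forallP ho].
have key : forall i : 'I_p, exists x : 'I_m,
    [/\ h x = i, minpre h i = x & minpre [ffun a => h (f a)] i = minpre f x].
  move=> i; have /existsP[y /eqP hy] := hs i.
  have [x hx [mhx xmin]] := minpre_spec hy.
  have /existsP[a /eqP fa] := fs x.
  have [b fb [mfb bmin]] := minpre_spec fa.
  exists x; split => //; rewrite mfb.
  have hfb : [ffun a => h (f a)] b = i by rewrite ffunE fb.
  have [c hfc [-> cmin]] := minpre_spec hfb.
  apply/eqP; rewrite eqn_leq; apply/andP; split; first by apply: cmin.
  move: hfc; rewrite ffunE => hfc.
  have := xmin _ hfc; rewrite leq_eqVlt => /orP[/eqP xe|xlt].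
    by apply: bmin; apply: val_inj.
  have /implyP/(_ xlt) := forallP (fo x) (f c).
  have /existsP[c' /eqP fc'] := fs (f c).
  have [d fd [mfd dmin]] := minpre_spec (erefl (f c)).
  rewrite mfb mfd => bd; apply: ltnW; apply: (leq_trans bd); exact: dmin.
apply/andP; split.
  apply/forallP => i; have /existsP[x /eqP hx] := hs i.
  have /existsP[a /eqP fa] := fs x.
  by apply/existsP; exists a; rewrite ffunE fa hx.
apply/forallP => i; apply/forallP => j; apply/implyP => ij.
have [x [hx mhx ex]] := key i; have [y [hy mhy ey]] := key j.
rewrite ex ey.
have := implyP (forallP (ho i) j) ij; rewrite mhx mhy => xy.
exact: (implyP (forallP (fo x) y) xy).
Qed.

Definition gOS_comp (n m p : nat) (h : gOS_hom m p) (f : gOS_hom n m) :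
    gOS_hom n p :=
  @GOSHom n p [ffun a => gmap h (gmap f a)]
    [ffun i => ggrade h i + \sum_(j : 'I_m | gmap h j == i) ggrade f j]
    (ordered_surj_comp (gmapP f) (gmapP h)).

Definition gOS : cat_data := @CatData nat gOS_hom gOS_comp.

(* Main.v *)
Require Import Defs.
From mathcomp Require Import all_boot all_order.
From Stdlib Require Import Classical ClassicalEpsilon.
Set Implicit Arguments. Unset Strict Implicit. Unset Printing Implicit Defensive.

Lemma noeth_mono (T : Type) (R R' : T -> T -> Prop) :
  (forall x y, R x y -> R' x y) -> noetherian R -> noetherian R'.
Proof. by move=> H N s; have [i [j [ij r]]] := N s; exists i, j; split=> //; apply: H. Qed.

Lemma choice_nat (P : nat -> nat -> Prop) :
  (forall i, exists j, P i j) -> {f : nat -> nat | forall i, P i (f i)}.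
Proof.
move=> H; exists (fun i => proj1_sig (constructive_indefinite_description _ (H i))).
by move=> i; case: (constructive_indefinite_description _ (H i)).
Qed.

Lemma iter_ge (g : nat -> nat) (x0 : nat) k :
  (forall x, x < g x) -> x0 <= iter k g x0.
Proof.
move=> H; elim: k => //= k IH; apply: leq_trans IH _; exact: ltnW.
Qed.

Lemma noeth_chain (T : Type) (R : T -> T -> Prop) (s : nat -> T) :
  noetherian R -> exists phi : nat -> nat,
    (forall k, phi k < phi k.+1) /\ forall k, R (s (phi k)) (s (phi k.+1)).
Proof.
move=> N.
pose term i := ~ exists j, i < j /\ R (s i) (s j).
case: (classic (exists N0, forall i, N0 <= i -> ~ term i)) => [[N0 HN]|HN].
  have Hex : forall i, exists j, N0 <= i -> i < j /\ R (s i) (s j).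
    move=> i; case: (leqP N0 i) => h.
      by have [j Hj] := NNPP _ (HN i h); exists j.
    by exists 0.
  have [nx Hnx] := choice_nat Hex.
  have ge : forall k, N0 <= iter k nx N0.
    elim=> //= k IH; apply: leq_trans IH (ltnW (proj1 (Hnx _ IH))).
  exists (fun k => iter k nx N0); split => k /=; [exact: (proj1 (Hnx _ (ge k))) | exact: (proj2 (Hnx _ (ge k)))].
have HN' : forall N0, exists i, N0 <= i /\ term i.
  move=> N0; apply: NNPP => H; apply: HN; exists N0 => i Hi Ht; apply: H.
  by exists i.
have [t Ht] := choice_nat HN'.
pose g x := t x.+1.
have gi : forall x, x < g x by move=> x; exact: (proj1 (Ht x.+1)).
pose psi k := iter k g (t 0).
have [i [j [ij Rij]]] := N (fun k => s (psi k)).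
have tm : forall k, term (psi k).
  by case=> [|k] /=; [exact: (proj2 (Ht 0)) | exact: (proj2 (Ht _))].
exfalso; apply: (tm i); exists (psi j); split => //.
by apply: (homo_ltn ltn_trans) => // k; exact: gi.
Qed.

Lemma noeth_and (T : Type) (R1 R2 : T -> T -> Prop) :
  (forall x y z, R1 x y -> R1 y z -> R1 x z) ->
  noetherian R1 -> noetherian R2 -> noetherian (fun x y => R1 x y /\ R2 x y).
Proof.
move=> tr N1 N2 s.
have [phi [inc ch]] := noeth_chain s N1.
have [i [j [ij H2]]] := N2 (fun k => s (phi k)).
exists (phi i), (phi j); split; first exact: (homo_ltn ltn_trans inc).
split=> //.
have gen : forall i j, i < j -> R1 (s (phi i)) (s (phi j)).
  move=> a b; elim: b => // b IH; rewrite ltnS leq_eqVlt => /orP[/eqP ->|ab].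
    exact: ch.
  exact: tr (IH ab) (ch b).
exact: gen.
Qed.

Lemma noeth_measure (T : Type) (F : T -> nat) : noetherian (fun x y => F x <= F y).
Proof.
move=> s.
suff H : forall v i, F (s i) = v -> exists i0 j, i0 < j /\ F (s i0) <= F (s j).
  exact: H (F (s 0)) 0 erefl.
elim/ltn_ind => v IH i Hv.
case: (leqP (F (s i)) (F (s i.+1))) => h.
  by exists i, i.+1.
by apply: (IH _ _ i.+1 erefl); rewrite -Hv.
Qed.

Lemma dickson (T : Type) (n : nat) (G : T -> 'I_n -> nat) :
  noetherian (fun x y => forall a, G x a <= G y a).
Proof.
suff H : forall k, noetherian (fun x y => forall a : 'I_n, a < k -> G x a <= G y a).
  by apply: noeth_mono (H n) => x y Hxy a; apply: Hxy.
elim=> [|k IH].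
  by move=> s; exists 0, 1; split => // a.
have N2 : noetherian (fun x y => forall a : 'I_n, val a = k -> G x a <= G y a).
  case: (ltnP k n) => kn.
    apply: noeth_mono (noeth_measure (fun x => G x (Ordinal kn))) => x y Hxy a ak.
    by have -> : a = Ordinal kn by apply: val_inj.
  by move=> s; exists 0, 1; split => // a ak; move: (ltn_ord a); rewrite ak ltnNge kn.
apply: noeth_mono (noeth_and _ IH N2).
  move=> x y [H1 H2] a; rewrite ltnS leq_eqVlt => /orP[/eqP ak|ak].
    exact: H2.
  exact: H1.
move=> x y z H1 H2 a ak; exact: leq_trans (H1 a ak) (H2 a ak).
Qed.

Lemma ex_min_nat (P : nat -> Prop) : (exists n, P n) -> exists n, P n /\ forall m, P m -> n <= m.
Proof.
case=> n; elim/ltn_ind: n => n IH Pn.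
case: (classic (exists m, m < n /\ P m)) => [[m [mn Pm]]|H]; first exact: IH Pm.
exists n; split => // m Pm; rewrite leqNgt; apply/negP => mn; apply: H; by exists m.
Qed.

Section Higman.
Variable A : finType.

Definition bad (s : nat -> seq A) := forall i j, i < j -> ~~ subseq (s i) (s j).
Definition ext (p : seq (seq A)) :=
  exists s, bad s /\ forall i, i < size p -> s i = nth [::] p i.

Lemma nextw_ex : exists nw : seq (seq A) -> seq A, forall p, ext p ->
  ext (rcons p (nw p)) /\ forall w', ext (rcons p w') -> size (nw p) <= size w'.
Proof.
have H : forall p, exists w, ext p ->
  ext (rcons p w) /\ forall w', ext (rcons p w') -> size w <= size w'.
  move=> p; case: (classic (ext p)) => [[s [bs Hs]]|np]; last by exists [::].
  have e0 : ext (rcons p (s (size p))).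
    exists s; split => // i; rewrite nth_rcons size_rcons ltnS leq_eqVlt => /orP[/eqP ->|hi].
      by rewrite ltnn eqxx.
    by rewrite hi Hs.
  have [n [[w [sw ew]] nmin]] := @ex_min_nat (fun n => exists w, size w = n /\ ext (rcons p w))
    (ex_intro _ _ (ex_intro _ _ (conj erefl e0))).
  exists w => _; split => // w' e'; rewrite sw; apply: nmin; by exists w'.
exists (fun p => proj1_sig (constructive_indefinite_description _ (H p))).
move=> p; case: (constructive_indefinite_description _ (H p)) => w /= Hw; exact: Hw.
Qed.

Theorem higman : noetherian (fun s t : seq A => subseq s t).
Proof.
move=> s0; apply: NNPP => Hns.
have bs0 : bad s0.
  move=> i j ij; apply/negP => sij; apply: Hns; by exists i, j.
have [nw Hnw] := nextw_ex.
pose pref k := iter k (fun p => rcons p (nw p)) [::].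
pose M k := nw (pref k).
have spref : forall k, size (pref k) = k by elim=> //= k IH; rewrite size_rcons IH.
have epref : forall k, ext (pref k).
  elim=> [|k IH]; first by exists s0.
  exact: (proj1 (Hnw _ IH)).
have npref : forall k i, i < k -> nth [::] (pref k) i = M i.
  elim=> // k IH i; rewrite ltnS leq_eqVlt /= nth_rcons spref => /orP[/eqP ->|ik].
    by rewrite ltnn eqxx.
  by rewrite ik IH.
have bM : bad M.
  move=> i j ij; have [s [bs Hs]] := epref j.+1.
  rewrite -(npref j.+1 i) ?(ltn_trans ij) // -(npref j.+1 j) //.
  rewrite -!Hs ?spref ?(ltn_trans ij) //; exact: bs.
have minM : forall k w', ext (rcons (pref k) w') -> size (M k) <= size w'.
  move=> k w' e; exact: (proj2 (Hnw _ (epref k)) w' e).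
have nM : forall k, M k != [::].
  move=> k; apply/eqP => Mk; move: (bM k k.+1 (ltnSn k)); by rewrite Mk sub0seq.
case E0: (M 0) (nM 0) => [|a0 t0] // _.
pose hd k := head a0 (M k); pose tl k := behead (M k).
have Mht : forall k, M k = hd k :: tl k.
  by move=> k; rewrite /hd /tl; case: (M k) (nM k).
have [a Ha] : exists a, forall N, exists k, N <= k /\ hd k = a.
  apply: NNPP => H.
  have H' : forall a, exists N, forall k, N <= k -> hd k <> a.
    move=> a; apply: NNPP => H1; apply: H; exists a => N; apply: NNPP => H2.
    apply: H1; exists N => k Nk hk; apply: H2; by exists k.
  have [Nf HNf] := fin_all_exists H'.
  pose B := \max_a Nf a.
  by apply: (HNf (hd B) B) => //; exact: leq_bigmax.
have [nx Hnx] := choice_nat Ha.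
pose g x := nx x.+1.
have gi : forall x, x < g x by move=> x; exact: (proj1 (Hnx x.+1)).
pose phi k := iter k g (nx 0).
have phim : {homo phi : i j / i < j} by apply: (homo_ltn ltn_trans) => k; exact: gi.
have phia : forall k, hd (phi k) = a by case=> [|k] /=; [exact: (proj2 (Hnx 0)) | exact: (proj2 (Hnx _))].
pose i0 := phi 0.
have phige : forall k, i0 <= phi k by case=> // k; apply: ltnW; apply: phim.
pose s' k := if k < i0 then M k else tl (phi (k - i0)).
have bs' : bad s'.
  move=> i j ij; rewrite /s'; case: (ltnP j i0) => ji.
    by rewrite (ltn_trans ij ji); apply: bM.
  case: (ltnP i i0) => ii.
    apply/negP => sub; apply: (negP (bM i (phi (j - i0)) (leq_trans ii (phige _)))).
    apply: subseq_trans sub _; rewrite Mht; exact: subseq_cons.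
  apply/negP => sub; have lt : phi (i - i0) < phi (j - i0).
    by apply: phim; rewrite ltn_sub2r // (leq_ltn_trans ii ij).
  apply: (negP (bM _ _ lt)).
  by rewrite !Mht !phia /= eqxx.
have e' : ext (rcons (pref i0) (tl i0)).
  exists s'; split => // i; rewrite nth_rcons size_rcons spref ltnS leq_eqVlt /s' => /orP[/eqP ->|hi].
    by rewrite ltnn eqxx subnn.
  by rewrite hi npref.
have := minM i0 _ e'; rewrite Mht /= ltnn //.
Qed.
End Higman.

Fixpoint lexle (s t : seq nat) : bool :=
  match s, t with
  | [::], _ => true
  | _ :: _, [::] => false
  | x :: s', y :: t' => (x < y) || ((x == y) && lexle s' t')
  end.

Lemma lexle_refl s : lexle s s.
Proof. by elim: s => //= x s ->; rewrite eqxx orbT. Qed.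

Lemma lexle_anti s t : size s = size t -> lexle s t -> lexle t s -> s = t.
Proof.
elim: s t => [|x s IH] [|y t] //= [st] /orP[xy|/andP[/eqP xy l1]] /orP[yx|/andP[/eqP yx l2]].
- by move: (ltn_trans xy yx); rewrite ltnn.
- by move: xy; rewrite yx ltnn.
- by move: yx; rewrite xy ltnn.
- by rewrite xy (IH t).
Qed.

Lemma lexle_trans s t u : lexle s t -> lexle t u -> lexle s u.
Proof.
elim: s t u => [|x s IH] [|y t] [|z u] //= /orP[xy|/andP[/eqP xy l1]] /orP[yz|/andP[/eqP yz l2]].
- by rewrite (ltn_trans xy yz).
- by rewrite -yz xy.
- by rewrite xy yz.
- by rewrite xy yz eqxx (IH t u) ?orbT.
Qed.

Lemma lexle_total s t : size s = size t -> lexle s t || lexle t s.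
Proof.
elim: s t => [|x s IH] [|y t] //= [st].
case: (ltngtP x y) => //= xy.
exact: IH.
Qed.

Lemma lexlt_nth s t : size s = size t -> lexle s t -> s <> t ->
  exists k, [/\ k < size s, nth 0 s k < nth 0 t k &
                forall l, l < k -> nth 0 s l = nth 0 t l].
Proof.
elim: s t => [|x s IH] [|y t] //= [st] /orP[xy|/andP[/eqP xy l1]] neq.
  by exists 0; split.
have [|k [k1 k2 k3]] := IH t st l1; first by move=> e; apply: neq; rewrite xy e.
exists k.+1; split => //; case=> //= l lk; rewrite ?xy //; exact: k3.
Qed.

Lemma nth_lexlt s t k : size s = size t -> k < size s -> nth 0 s k < nth 0 t k ->
  (forall l, l < k -> nth 0 s l = nth 0 t l) -> lexle s t /\ s <> t.
Proof.
move=> st ks lt eq; split; last by move=> e; move: lt; rewrite e ltnn.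
elim: s t k st ks lt eq => [|x s IH] [|y t] //= k [st].
case: k => [|k] /= ks lt eq; first by rewrite lt.
have /= -> := eq 0 erefl; rewrite eqxx ltnn /=.
apply: (IH t k st ks lt) => l lk; exact: (eq l.+1).
Qed.

Definition lexR L (a b : seq nat) := [/\ lexle a b, a <> b & size a = L].

Lemma lex_wf L s : size s = L -> Acc (lexR L) s.
Proof.
elim: L s => [|L IH] s.
  move/size0nil => ->; constructor => a [_ ne e]; case: ne; exact: size0nil e.
case: s => [|x s]; first by [].
move=> [sL].
have As := IH s sL.
elim/ltn_ind: x s sL As => x IHx s sL As.
elim: As sL => {}s _ IHs sL.
constructor => -[|y a] []; first by [].
move=> /= /orP[yx|/andP[/eqP yx l1]] ne [aL].
  exact: IHx yx a aL (IH a aL).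
rewrite yx in ne *; have aL' := aL; apply: (IHs a); first split; [exact: l1 | by move=> e; apply: ne; rewrite e | exact: aL' | exact: aL'].
Qed.

Lemma gos_ext m n (f f' : gOS_hom m n) : gmap f = gmap f' -> ggrade f = ggrade f' -> f = f'.
Proof.
case: f f' => g1 d1 p1 [g2 d2 p2] /= e1 e2; subst.
by rewrite (bool_irrelevance p1 p2).
Qed.

Lemma gos_surj m n (f : gOS_hom m n) (i : 'I_n) : exists a, gmap f a = i.
Proof.
by case: f => g d /= /andP[/forallP /(_ i) /existsP[a /eqP e] _]; exists a.
Qed.

Lemma gos_ord m n (f : gOS_hom m n) (i j : 'I_n) : i < j -> minpre (gmap f) i < minpre (gmap f) j.
Proof.
by case: f => g d /= /andP[_ /forallP /(_ i) /forallP /(_ j) /implyP].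
Qed.

Lemma minpre_lt m n (f : gOS_hom m n) (i : 'I_n) :
  exists2 b : 'I_m, gmap f b = i & minpre (gmap f) i = b /\ forall k, gmap f k = i -> b <= k.
Proof. have [a fa] := gos_surj f i; exact: minpre_spec fa. Qed.

Lemma minpre_le m n (f : gOS_hom m n) (l : 'I_m) : minpre (gmap f) (gmap f l) <= l.
Proof. by have [b fb [-> bmin]] := minpre_spec (erefl (gmap f l)); apply: bmin. Qed.

Lemma before_minpre m n (f : gOS_hom m n) (i : 'I_n) (l : 'I_m) :
  l < minpre (gmap f) i -> gmap f l < i.
Proof.
move=> li; rewrite ltnNge; apply/negP; rewrite leq_eqVlt => /orP[/eqP e|lt].
  have e' : gmap f l = i by apply: val_inj.
  have [b fb [mb bmin]] := minpre_lt f i.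
  by move: li; rewrite mb ltnNge bmin.
have := gos_ord f lt; have := minpre_le f l => h1 h2.
by move: (leq_ltn_trans h1 (ltn_trans li h2)); rewrite ltnn.
Qed.

Section Key.
Variables m n : nat.
Definition wd (f : gOS_hom m n) (k : nat) : nat :=
  match (insub k : option 'I_m) with Some o => val (gmap f o) | None => 0 end.
Definition gd (f : gOS_hom m n) (a : nat) : nat :=
  match (insub a : option 'I_n) with Some o => ggrade f o | None => 0 end.
Definition key (f : gOS_hom m n) : seq nat :=
  mkseq (fun k => if k < m then wd f k else gd f (k - m)) (m + n).

Lemma size_key f : size (key f) = m + n. Proof. exact: size_mkseq. Qed.

Lemma nth_key_w f (o : 'I_m) : nth 0 (key f) o = val (gmap f o).
Proof. by rewrite nth_mkseq ?ltn_ord ?(leq_trans (ltn_ord o) (leq_addr _ _)) // /wd valK. Qed.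

Lemma nth_key_g f (o : 'I_n) : nth 0 (key f) (m + o) = ggrade f o.
Proof. by rewrite nth_mkseq ?ltn_add2l // ltnNge leq_addr /= addKn /gd valK. Qed.

Lemma key_inj f f' : key f = key f' -> f = f'.
Proof.
move=> e; apply: gos_ext; apply/ffunP => o.
  by apply: val_inj; rewrite -!nth_key_w e.
by rewrite -!nth_key_g e.
Qed.
End Key.

Lemma g1 (n : nat) : exists le, @admissible_order (op_cat gOS) n le.
Proof.
exists (fun c' (f f' : gOS_hom c' n) => lexle (key f) (key f')).
split.
  move=> c'; split.
  - by move=> x; exact: lexle_refl.
  - by move=> x y l1 l2; apply: key_inj; apply: lexle_anti l1 l2; rewrite !size_key.
  - by move=> x y z; exact: lexle_trans.
  - by move=> x y; apply/orP; apply: lexle_total; rewrite !size_key.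
  suff H : forall k, Acc (lexR (c' + n)) k -> forall x : gOS_hom c' n, key x = k ->
      Acc (fun x y : gOS_hom c' n => lexle (key x) (key y) /\ x <> y) x.
    by move=> x; apply: (H _ (lex_wf (size_key x)) x erefl).
  move=> k A; elim: A => k' _ IH x e; constructor => y [le ne].
  apply: (IH (key y)) => //; split; first by rewrite -e.
    by move=> E; apply: ne; apply: key_inj; rewrite E e.
  exact: size_key.
move=> c' c'' g f f' [le ne] /=.
rewrite /strict_of.
change nat in c', c''.
change (gOS_hom c'' c') in g; change (gOS_hom c' n) in f; change (gOS_hom c' n) in f'.
have ne' : key f <> key f' by move=> E; apply: ne; apply: key_inj.
have [k [kl lt eqb]] := lexlt_nth (etrans (size_key f) (esym (size_key f'))) le ne'.
rewrite size_key in kl.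
suff : lexle (key (gOS_comp f g)) (key (gOS_comp f' g)) /\ key (gOS_comp f g) <> key (gOS_comp f' g).
  by case=> l1 l2; split => // E; apply: l2; rewrite E.
case: (ltnP k c') => kc.
  pose o := Ordinal kc.
  have lt' : val (gmap f o) < val (gmap f' o) by move: lt; rewrite -[k]/(nat_of_ord o) !nth_key_w.
  have [b gb [mb bmin]] := minpre_lt g o.
  apply: (@nth_lexlt _ _ b); first by rewrite !size_key.
  - by rewrite size_key (leq_trans (ltn_ord b) (leq_addr _ _)).
  - by rewrite !nth_key_w /= !ffunE gb.
  move=> l lb.
  have lc : l < c'' by apply: ltn_trans lb (ltn_ord b).
  pose lo := Ordinal lc.
  have glo : gmap g lo < o by apply: before_minpre; rewrite mb.
  rewrite -[l]/(nat_of_ord lo) !nth_key_w /= !ffunE.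
  have := eqb _ glo; rewrite !nth_key_w => /val_inj ->; done.
have EM : gmap f = gmap f'.
  apply/ffunP => o; apply: val_inj; rewrite -!nth_key_w; apply: eqb.
  exact: leq_trans (ltn_ord o) kc.
have an : k - c' < n by rewrite ltn_subLR.
pose a := Ordinal an.
have ka : k = c' + a by rewrite /= subnKC.
have lt' : ggrade f a < ggrade f' a by move: lt; rewrite ka !nth_key_g.
apply: (@nth_lexlt _ _ (c'' + a)); first by rewrite !size_key.
- by rewrite size_key ltn_add2l.
- by rewrite !nth_key_g /= !ffunE EM ltn_add2r.
move=> l la; case: (ltnP l c'') => lc.
  pose lo := Ordinal lc.
  by rewrite -[l]/(nat_of_ord lo) !nth_key_w /= !ffunE EM.
have lb : l - c'' < n by rewrite ltn_subLR // (leq_trans la) // leq_add2l ltnW.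
pose b := Ordinal lb.
have lE : l = c'' + b by rewrite /= subnKC.
have bk : c' + b < k by rewrite ka ltn_add2l -(ltn_add2l c'') -lE.
have := eqb _ bk; rewrite lE !nth_key_g /= !ffunE EM => ->; done.
Qed.

Lemma subseq_emb (T : eqType) (t s : seq T) : subseq s t ->
  exists io : nat -> nat,
    (forall i j, i < j -> j < size s -> io i < io j) /\
    (forall i, i < size s -> io i < size t /\ forall x0, nth x0 t (io i) = nth x0 s i).
Proof.
elim: t s => [|y t IH] s.
  by rewrite subseq0 => /eqP ->; exists id.
case: s => [|x s]; first by move=> _; exists id.
rewrite /=; case: eqP => [xy|nxy] sub.
  have [io [h1 h2]] := IH s sub.
  exists (fun i => if i is i'.+1 then (io i').+1 else 0); split.
    by move=> [|i] [|j] //= ij js; rewrite ltnS; apply: h1.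
  move=> [|i] /=; first by rewrite xy.
  by rewrite ltnS => /h2 [a b]; rewrite ltnS; split => // x1; apply: b.
have [io [h1 h2]] := IH _ sub.
exists (fun i => (io i).+1); split.
  by move=> i j ij js; rewrite ltnS; apply: h1.
by move=> i /h2 [a b]; rewrite ltnS; split => // x1; apply: b.
Qed.

Definition enc m n (f : gOS_hom m n) : seq ('I_n * bool) :=
  [seq (gmap f k, minpre (gmap f) (gmap f k) == k) | k <- enum 'I_m].

Lemma size_enc m n (f : gOS_hom m n) : size (enc f) = m.
Proof. by rewrite size_map size_enum_ord. Qed.

Lemma nth_enc m n (f : gOS_hom m n) x0 (k : 'I_m) :
  nth x0 (enc f) k = (gmap f k, minpre (gmap f) (gmap f k) == k).
Proof.
rewrite (nth_map k) ?size_enum_ord ?ltn_ord //; by rewrite nth_ord_enum.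
Qed.

Lemma factor m m' n (f : gOS_hom m n) (f' : gOS_hom m' n) :
  subseq (enc f) (enc f') -> (forall a, ggrade f a <= ggrade f' a) ->
  exists h : gOS_hom m' m, f' = gOS_comp f h.
Proof.
move=> sub gle.
have [io [h1 h2]] := subseq_emb sub.
rewrite size_enc in h1 h2.
have ioP : forall k : 'I_m, io k < m'.
  by move=> k; have [a _] := h2 k (ltn_ord k); rewrite size_enc in a.
pose iot (k : 'I_m) : 'I_m' := Ordinal (ioP k).
have iotE : forall k : 'I_m, gmap f' (iot k) = gmap f k /\
    (minpre (gmap f') (gmap f' (iot k)) == iot k) = (minpre (gmap f) (gmap f k) == k).
  move=> k; have [_ b] := h2 k (ltn_ord k); move: (b (gmap f k, true)).
  by rewrite -[io k]/(nat_of_ord (iot k)) !nth_enc; case.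
have iotm : forall k k' : 'I_m, k < k' -> iot k < iot k'.
  by move=> k k' kk'; apply: h1.
have iotle : forall k k' : 'I_m, iot k <= iot k' -> k <= k'.
  by move=> k k'; apply: contraTT; rewrite -!ltnNge; exact: iotm.
have first : forall a : 'I_n, exists2 b : 'I_m, gmap f b = a & minpre (gmap f') a = iot b.
  move=> a; have [b fb [mb _]] := minpre_lt f a; exists b => //.
  have [e1 e2] := iotE b.
  have : minpre (gmap f) (gmap f b) == b by rewrite fb mb.
  by rewrite -e2 e1 fb => /eqP.
have hex : forall p : 'I_m', exists k : 'I_m, [/\ iot k <= p, gmap f k = gmap f' p &
     forall k', iot k' <= p -> gmap f k' = gmap f' p -> k' <= k].
  move=> p; have [b fb mb] := first (gmap f' p).
  have Pb : (iot b <= p) && (gmap f b == gmap f' p) by rewrite -mb minpre_le fb eqxx.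
  case: (@arg_maxnP _ b (fun k : 'I_m => (iot k <= p) && (gmap f k == gmap f' p)) (fun k : 'I_m => nat_of_ord k) Pb) => k /andP[k1 /eqP k2] kmax.
  exists k; split => // k' k1' k2'; apply: kmax; by rewrite k1' k2' eqxx.
have [hf hfP] := fin_all_exists hex.
have hio : forall k, hf (iot k) = k.
  move=> k; have [a1 a2 a3] := hfP (iot k); apply: val_inj; apply/eqP.
  rewrite eqn_leq (iotle _ _ a1) a3 //; by rewrite (proj1 (iotE k)).
pose hm := [ffun p => hf p].
have hosurj : ordered_surj hm.
  have mp : forall k, minpre hm k = iot k.
    move=> k; have hk : hm (iot k) = k by rewrite ffunE hio.
    have [b hb [-> bmin]] := minpre_spec hk.
    apply/eqP; rewrite eqn_leq bmin /=; last by rewrite ffunE hio.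
    have [a1 _ _] := hfP b; move: hb; rewrite ffunE => hb; by rewrite hb in a1.
  apply/andP; split; apply/forallP => i.
    by apply/existsP; exists (iot i); rewrite ffunE hio.
  apply/forallP => j; apply/implyP => ij; rewrite !mp; exact: iotm.
pose gr := [ffun j : 'I_m => if minpre (gmap f) (gmap f j) == j
             then ggrade f' (gmap f j) - ggrade f (gmap f j) else 0].
exists (GOSHom gr hosurj).
apply: gos_ext => /=.
  by apply/ffunP => p; rewrite !ffunE; have [_ -> _] := hfP p.
apply/ffunP => i; rewrite !ffunE.
have [b fb [mb _]] := minpre_lt f i.
rewrite (bigD1 b) /=; last by rewrite fb.
rewrite big1.
  by rewrite ffunE fb mb eqxx addn0 subnKC.
move=> j /andP[/eqP fj jb]; rewrite ffunE fj mb.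
case: eqP => // e; exfalso; move/eqP: jb; apply; apply: val_inj; by rewrite /= e.
Qed.

Lemma g2 (n : nat) : noetherian (@under_le (op_cat gOS) n).
Proof.
pose T := {c' : Obj (op_cat gOS) & Hom (op_cat gOS) n c'}.
have N1 : noetherian (fun x y : T => subseq (enc (projT2 x)) (enc (projT2 y))).
  move=> s; have [i [j [ij H]]] := @higman _ (fun k => enc (projT2 (s k))).
  by exists i, j.
have N2 := dickson (fun (x : T) (a : 'I_n) => ggrade (projT2 x) a).
have N := noeth_and (fun x y z => @subseq_trans _ _ _ _) N1 N2.
apply: noeth_mono N => x y [H1 H2].
have [h e] := factor H1 H2.
by exists h.
Qed.

Theorem proposition4p8 : groebner (op_cat gOS).
Proof.
move=> c; split; [exact: g1 | exact: g2].
Qed.
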